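(* Let $P$ be a prime differential algebra and let $Q\subseteq P$ be a differential subalgebra. Then $Q$ is prime.
   Context: All algebras are commutative associative algebras (not necessarily with unity) over a field $k$ of characteristic zero. A differential algebra is such an algebra equipped with a $k$-linear derivation $a\mapsto a'$ (satisfying the Leibniz rule). A differential subalgebra is a subalgebra closed under the derivation; a differential ideal is an ideal $I$ with $I'\subseteq I$. A differential algebra is called prime if for any two nonzero differential ideals $A,B$ one has $AB\neq 0$. *)

(* Defs.v *)
From HB Require Import structures.
From mathcomp Require Import all_boot all_order all_algebra.
Set Implicit Arguments. Unset Strict Implicit. Unset Printing Implicit Defensive.
Import GRing.Theory.
Local Open Scope ring_scope.

(* A commutative associative (not necessarily unital) k-algebra equipped with
   a k-linear derivation. *)
Record dalg (k : fieldType) := DAlg {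
  dcarrier :> lmodType k;
  dmul : dcarrier -> dcarrier -> dcarrier;
  dder : dcarrier -> dcarrier;
  dmulA : forall x y z, dmul x (dmul y z) = dmul (dmul x y) z;
  dmulC : forall x y, dmul x y = dmul y x;
  dmul_linear : forall (a : k) x y z, dmul (a *: x + y) z = a *: dmul x z + dmul y z;
  dder_linear : forall (a : k) x y, dder (a *: x + y) = a *: dder x + dder y;
  dder_Leibniz : forall x y, dder (dmul x y) = dmul (dder x) y + dmul x (dder y)
}.

Section DefsSec.
Variables (k : fieldType) (P : dalg k).

Definition is_dsubalg (S : P -> Prop) : Prop :=
  [/\ S 0,
      (forall x y, S x -> S y -> S (x + y)),
      (forall (a : k) x, S x -> S (a *: x)),
      (forall x y, S x -> S y -> S (dmul x y))
    & (forall x, S x -> S (dder x))].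

Definition is_dideal_in (S I : P -> Prop) : Prop :=
  (forall x, I x -> S x) /\
  I 0 /\
  (forall x y, I x -> I y -> I (x + y)) /\
  (forall (a : k) x, I x -> I (a *: x)) /\
  (forall s x, S s -> I x -> I (dmul s x)) /\
  (forall x, I x -> I (dder x)).

Definition nonzero_set (I : P -> Prop) : Prop := exists x, I x /\ x <> 0.

(* membership in the product ideal IJ: finite sums of products a b, a in I, b in J *)
Definition prod_mem (I J : P -> Prop) (x : P) : Prop :=
  exists s : seq (P * P),
    (forall p, p \in s -> I p.1 /\ J p.2) /\
    x = \sum_(p <- s) dmul p.1 p.2.

Definition dprime_on (S : P -> Prop) : Prop :=
  forall I J : P -> Prop,
    is_dideal_in S I -> is_dideal_in S J ->
    nonzero_set I -> nonzero_set J ->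
    nonzero_set (prod_mem I J).

Definition dprime : Prop := dprime_on (fun _ => True).
End DefsSec.

(* Main.v *)
Require Import Defs.
From mathcomp Require Import all_boot all_order all_algebra.
From Stdlib Require Import Classical.
Set Implicit Arguments. Unset Strict Implicit. Unset Printing Implicit Defensive.
Import GRing.Theory.
Local Open Scope ring_scope.

Section Aux.
Variables (k : fieldType) (P : dalg k).

Lemma dmulD x y z : dmul (x + y) z = dmul x z + dmul (y : P) z.
Proof. by have := dmul_linear 1 x y z; rewrite !scale1r. Qed.

Lemma dmul0 z : dmul (0 : P) z = 0.
Proof.
have := dmulD 0 0 z; rewrite addr0 => h.
by have := congr1 (fun t => t - dmul 0 z) h; rewrite subrr addrK => <-.
Qed.

Lemma dmulZ a x z : dmul (a *: x) z = a *: dmul (x : P) z.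
Proof. by have := dmul_linear a x 0 z; rewrite addr0 dmul0 addr0. Qed.

Lemma dmulr0 z : dmul z (0 : P) = 0.
Proof. by rewrite dmulC dmul0. Qed.

Lemma dder0 : dder (0 : P) = 0.
Proof.
have := dder_linear 1 (0 : P) 0; rewrite addr0 !scale1r => h.
by have := congr1 (fun t => t - dder (0:P)) h; rewrite subrr addrK => <-.
Qed.

Definition ann (S : P -> Prop) : P -> Prop :=
  fun x => forall s, S s -> dmul s x = 0.

Lemma ann_ideal (S : P -> Prop) : (forall s, S s -> S (dder s)) ->
  is_dideal_in (fun _ => True) (ann S).
Proof.
move=> Sd; split; first by [].
split; first by move=> s _; rewrite dmulr0.
split; first by move=> x y hx hy s Ss; rewrite dmulC dmulD dmulC (hx s Ss) dmulC (hy s Ss) addr0.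
split; first by move=> a x hx s Ss; rewrite dmulC dmulZ dmulC (hx s Ss) scaler0.
split.
  move=> p x _ hx s Ss.
  by rewrite dmulA (dmulC s p) -dmulA (hx s Ss) dmulr0.
move=> x hx s Ss.
have := dder_Leibniz s x; rewrite (hx s Ss) dder0 (hx _ (Sd s Ss)) add0r.
by move=> <-.
Qed.

Lemma prod_ann_zero (A : P -> Prop) x :
  prod_mem A (ann A) x -> x = 0.
Proof.
move=> [s [hs ->]]; rewrite big1_seq // => p /andP [_ ps].
by have [h1 h2] := hs p ps; rewrite (h2 _ h1).
Qed.
End Aux.

Theorem lemma2 (k : fieldType) (hk : [pchar k]%R =i pred0) (P : dalg k)
  (Q : P -> Prop) :
  dprime P -> is_dsubalg Q -> dprime_on Q.
Proof.
move=> hP _ I J hI hJ [a [Ia a0]] [b [Jb b0]].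
apply: NNPP => hn.
have zero : forall x y, I x -> J y -> dmul x y = 0.
  move=> x y Ix Jy; apply: NNPP => nz; apply: hn.
  exists (dmul x y); split => //.
  exists [:: (x, y)]; split; first by move=> p; rewrite inE => /eqP ->.
  by rewrite big_cons big_nil addr0.
have Id : forall s, I s -> I (dder s) by case: hI => [_ [_ [_ [_ [_ ?]]]]].
pose A := ann I.
have hA := ann_ideal Id.
have Ad : forall s, A s -> A (dder s) by case: hA => [_ [_ [_ [_ [_ ?]]]]].
have hB := ann_ideal Ad.
have [x [hx x0]] := hP A (ann A) hA hB
  (ex_intro _ b (conj (fun s Is => zero s b Is Jb) b0))
  (ex_intro _ a (conj (fun s As => etrans (dmulC s a) (As a Ia)) a0)).
exact: x0 (prod_ann_zero hx).
Qed.
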